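(* For any integers $n\ge1$ and $k\ge1$ there exists a divisor $d\mid n$ with $d\le n^{1/2^k}$ such that \[ \tau(n)\le 2^{2^k-1}\tau(d)^{2^k}. \]
   Context: $\tau$ denotes the number-of-divisors function. *)

(* Defs.v *)
From mathcomp Require Import all_boot.
Definition tau (n : nat) : nat := size (divisors n).

(* Main.v *)
Require Import Defs.
From mathcomp Require Import all_boot.
From mathcomp Require Import zify.

Lemma tau_coprime m n : 0 < m -> 0 < n -> coprime m n -> tau (m * n) = tau m * tau n.
Proof.
move=> m0 n0 co.
rewrite /tau -(size_allpairs muln); apply: perm_size; apply: uniq_perm.
- exact: divisors_uniq.
- apply: allpairs_uniq; try exact: divisors_uniq.
  move=> [x1 y1] [x2 y2] /allpairsP[[a1 b1] /= [ha1 hb1 [-> ->]]]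
    /allpairsP[[a2 b2] /= [ha2 hb2 [-> ->]]] /= E.
  move: ha1 hb1 ha2 hb2; rewrite -!dvdn_divisors // => ha1 hb1 ha2 hb2.
  have ga : forall a b, a %| m -> b %| n -> gcdn m (a * b) = a.
    move=> a b ha hb; rewrite Gauss_gcdl; first exact/gcdn_idPr.
    exact: coprime_dvdr hb co.
  have gb : forall a b, a %| m -> b %| n -> gcdn n (a * b) = b.
    move=> a b ha hb; rewrite mulnC Gauss_gcdl; first exact/gcdn_idPr.
    by apply: coprime_dvdr ha _; rewrite coprime_sym.
  move: E => /= E.
  have e1 : a1 = a2 by rewrite -(ga a1 b1) // E ga.
  have e2 : b1 = b2 by rewrite -(gb a1 b1) // E gb.
  by rewrite e1 e2.
- move=> d; rewrite -dvdn_divisors ?muln_gt0 ?m0 //.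
  apply/idP/allpairsP.
  + move=> dd; exists (gcdn d m, gcdn d n) => /=.
    rewrite -!dvdn_divisors // dvdn_gcdr dvdn_gcdr; split => //.
    apply/eqP; rewrite eqn_dvd; apply/andP; split.
    * rewrite muln_gcdl dvdn_gcd dvdn_mulr //= muln_gcdr dvdn_gcd dvdn_mull //.
    * rewrite Gauss_dvd ?dvdn_gcdl //.
      apply: (coprime_dvdl (dvdn_gcdr _ _)); rewrite coprime_sym.
      apply: (coprime_dvdl (dvdn_gcdr _ _)); by rewrite coprime_sym.
  + case=> [[a b] [/= ha hb ->]]; move: ha hb; rewrite -!dvdn_divisors // => ha hb.
    exact: dvdn_mul.
Qed.

Lemma tau_pfactor p a : prime p -> tau (p ^ a) = a.+1.
Proof.
move=> pp; rewrite /tau -(size_iota 0 a.+1) -(size_map (expn p) (iota 0 a.+1)).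
apply: perm_size; apply: uniq_perm.
- exact: divisors_uniq.
- rewrite map_inj_uniq ?iota_uniq // => x y /eqP; rewrite eqn_exp2l ?prime_gt1 //.
  by move/eqP.
- move=> d; rewrite -dvdn_divisors ?expn_gt0 ?prime_gt0 //.
  apply/idP/mapP.
  + by case/(dvdn_pfactor _ _ pp) => e he ->; exists e => //; rewrite mem_iota.
  + by case=> e; rewrite mem_iota => /andP[_ he] ->; apply/(dvdn_pfactor _ _ pp); exists e.
Qed.

Lemma tau_gt0 n : 0 < n -> 0 < tau n.
Proof. by move=> n0; rewrite /tau; case: (divisors n) (divisors_id n0). Qed.

Lemma tau_mulp q x : prime q -> 0 < x -> tau (q * x) <= 2 * tau x.
Proof.
move=> pq x0; have [m co Ex] := pfactor_coprime pq x0.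
have m0 : 0 < m by move: x0; rewrite Ex muln_gt0 => /andP[].
rewrite Ex.
have com : forall e, coprime m (q ^ e) by move=> e; rewrite coprimeXr // coprime_sym.
have qe : forall e, 0 < q ^ e by move=> e; rewrite expn_gt0 prime_gt0.
rewrite mulnCA -expnS !tau_coprime // !tau_pfactor //.
nia.
Qed.

Lemma key N : forall n, 0 < n -> n <= N ->
  exists d, [/\ d %| n, d * d <= n & tau n <= 2 * tau d ^ 2].
Proof.
elim: N => [|N IH] n n0 nN; first lia.
case: (ltnP 1 n) => [n1|n1]; last first.
  have -> : n = 1 by lia.
  by exists 1.
set p := pdiv n; have pp : prime p := pdiv_prime n1.
have p1 := prime_gt1 pp.
have [m co En] := pfactor_coprime pp n0.
set a := logn p n in En.
have a0 : 0 < a by rewrite /a logn_gt0 mem_primes pp n0 pdiv_dvd.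
have m0 : 0 < m by move: n0; rewrite En muln_gt0 => /andP[].
have Pa' : p ^ 1 <= p ^ a by rewrite leq_pexp2l // prime_gt0.
have Pa : 2 <= p ^ a by rewrite expn1 in Pa'; lia.
have mn : m < n by rewrite En; nia.
have qe : forall e, 0 < p ^ e by move=> e; rewrite expn_gt0 prime_gt0.
have com : forall e, coprime m (p ^ e) by move=> e; rewrite coprimeXr // coprime_sym.
have cod : forall d e, d %| m -> coprime d (p ^ e).
  by move=> d e dm; apply: coprime_dvdl dm (com e).
have tn : tau n = tau m * a.+1 by rewrite En tau_coprime // tau_pfactor.
case: (ltnP 1 a) => [a2|a1].
  have [d [dd dm td]] := IH m m0 (ltnSE (leq_trans mn nN)).
  have d0 : 0 < d by apply: dvdn_gt0 m0 dd.
  set h := a./2.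
  have Ea : a = odd a + h + h by rewrite -{1}(odd_double_half a) -addnn addnA.
  have h1 : 1 <= h by move: Ea a2; case: (odd a) => /=; lia.
  have o1 : odd a <= 1 by case: (odd a).
  exists (d * p ^ h); split.
  - rewrite En dvdn_mul // dvdn_exp2l //; lia.
  - have : p ^ (h + h) <= p ^ a by rewrite leq_pexp2l ?prime_gt0 //; lia.
    rewrite expnD En => H; nia.
  - rewrite tn tau_coprime ?muln_gt0 ?d0 ?qe ?cod // tau_pfactor //.
    have ha : a.+1 <= h.+1 ^ 2 by rewrite Ea; nia.
    apply: leq_trans (leq_mul td ha) _; rewrite expnMn; lia.
have a1' : a = 1 by lia.
rewrite a1' expn1 in En tn.
case: (ltnP 1 m) => [m1|m1]; last first.
  have m_1 : m = 1 by lia.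
  exists 1; split; [by [] | lia | by rewrite tn m_1].
set q := pdiv m; have pq : prime q := pdiv_prime m1.
have qm : q %| m := pdiv_dvd m.
have pq' : p <= q by apply: pdiv_min_dvd; [exact: prime_gt1 | rewrite En dvdn_mulr].
set m2 := m %/ q.
have Em : m = m2 * q by rewrite divnK.
have m20 : 0 < m2 by move: m0; rewrite Em muln_gt0 => /andP[].
have q1 := prime_gt1 pq.
have m2n : m2 < n by rewrite En Em; nia.
have [d [dd dm td]] := IH m2 m20 (ltnSE (leq_trans m2n nN)).
have d0 : 0 < d by apply: dvdn_gt0 m20 dd.
exists (d * p); split.
- by rewrite En Em dvdn_mul // dvdn_mulr.
- have := leq_mul dm (leq_mul pq' (leqnn p)); rewrite En Em; lia.
- have dm' : d %| m by rewrite Em dvdn_mulr.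
  have tdp : tau (d * p ^ 1) = tau d * 2.
    by rewrite tau_coprime ?qe ?cod // tau_pfactor.
  rewrite expn1 in tdp; rewrite tn tdp.
  have : tau m <= 2 * tau m2 by rewrite Em mulnC; apply: tau_mulp.
  nia.
Qed.

Theorem mainTheorem6 (n k : nat) (hn : 1 <= n) (hk : 1 <= k) :
  exists d : nat, [/\ d %| n, d ^ (2 ^ k) <= n &
    tau n <= 2 ^ (2 ^ k - 1) * tau d ^ (2 ^ k)].
Proof.
elim: k hk => [//|k IHk] _.
case: (posnP k) => [->|k0].
  have [d [dd dm td]] := key n n hn (leqnn n).
  by exists d; split => //; rewrite expn1 /= mulnn.
have [d1 [d1n d1e t1]] := IHk k0.
have d10 : 0 < d1 by apply: dvdn_gt0 hn d1n.
have [d2 [d2d d2e t2]] := key d1 d1 d10 (leqnn d1).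
exists d2; split.
- exact: dvdn_trans d2d d1n.
- rewrite expnSr mulnC expnM; apply: leq_trans d1e.
  by rewrite leq_exp2r ?expn_gt0 // mulnn.
- have K0 : 0 < 2 ^ k by rewrite expn_gt0.
  set K := 2 ^ k in t1 K0 *.
  have t3 : tau d1 ^ K <= 2 ^ K * tau d2 ^ (2 * K).
    by rewrite expnM -expnMn leq_exp2r.
  apply: (leq_trans t1); rewrite expnSr -/K.
  have -> : K * 2 - 1 = (K - 1) + K by lia.
  rewrite expnD -mulnA leq_mul2l; apply/orP; right.
  by rewrite (mulnC K 2).
Qed.
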